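(* Let $\mathbf{B}\in\dot{\mathbb{P}}(\mathbb{L}(\mathbf{C}))$. Then $\mathbf{B}$ is singular for $\mathcal{D}(\mathbf{C},\Omega)$ if and only if there exists $\omega^*\in\Omega$ such that in every sufficient cause representation $(\mathbf{A},\mathfrak{B})$ for $\mathcal{D}(\mathbf{C},\Omega)$: (i) for every $\mathbf{B}^*\in\dot{\mathbb{P}}(\mathbb{L}(\mathbf{C}))$ with $|\mathbf{B}^*|=|\mathbf{C}|$ and $\mathbf{B}\subseteq\mathbf{B}^*$ there exists $\mathbf{B}_i\in\mathfrak{B}$ with $\mathbf{B}_i\subseteq\mathbf{B}^*$ and $A_i(\omega^* )=1$; and (ii) for every $\mathbf{B}_i\in\mathfrak{B}$ with $\mathbf{B}\not\subseteq\mathbf{B}_i$, $A_i(\omega^* )=0$.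
   Context: Events are binary random variables on a population $\Omega$; $\overline{X}=1-X$; $\mathbb{L}(\mathbf{C})=\mathbf{C}\cup\{\overline{X}:X\in\mathbf{C}\}$; $\dot{\mathbb{P}}(\mathbb{L}(\mathbf{C}))$ is the set of subsets of $\mathbb{L}(\mathbf{C})$ not containing both $X$ and $\overline{X}$; $(L)_{\mathbf{c}}$ is the value of literal $L$ under assignment $\mathbf{c}$; $\bigwedge(\mathbf{B})=\min_{L\in\mathbf{B}}L$. Potential outcomes $\mathcal{D}(\mathbf{C},\Omega)$: $D_{\mathbf{c}}(\omega)\in\{0,1\}$. $\mathbf{B}$ is a sufficient cause for $D$ relative to $\mathbf{C}$ for $\omega^*$ if some $\mathbf{c}^*$ has $(\bigwedge(\mathbf{B}))_{\mathbf{c}^*}=1$ and $D_{\mathbf{c}}(\omega^* )=1$ whenever $(\bigwedge(\mathbf{B}))_{\mathbf{c}}=1$; minimal if no proper subset is such; singular for $\omega^*$ if it is a minimal sufficient cause for $\omega^*$ and no other $\mathbf{B}'\in\dot{\mathbb{P}}(\mathbb{L}(\mathbf{C}))$ is a minimal sufficient cause for $\omega^*$; singular for $\mathcal{D}(\mathbf{C},\Omega)$ if singular for some $\omega^*\in\Omega$. A sufficient cause representation $(\mathbf{A},\mathfrak{B})$ for $\mathcal{D}(\mathbf{C},\Omega)$: binary random variables $\mathbf{A}=\langle A_1,\dots,A_p\rangle$ on $\Omega$ unaffected by interventions on $\mathbf{C}$, paired with $\mathfrak{B}=\langle\mathbf{B}_1,\dots,\mathbf{B}_p\rangle$, $\mathbf{B}_i\in\dot{\mathbb{P}}(\mathbb{L}(\mathbf{C}))$,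 such that $D_{\mathbf{c}}(\omega)=1$ iff some $j$ has $A_j(\omega)=1$ and $(\bigwedge(\mathbf{B}_j))_{\mathbf{c}}=1$. *)

(* Defs.v *)
From mathcomp Require Import all_boot.
Set Implicit Arguments. Unset Strict Implicit. Unset Printing Implicit Defensive.

(* C = <X_0,...,X_{n-1}> : n binary events, indexed by 'I_n.
   A literal of L(C) is a pair (i, b) : 'I_n * bool;
   (i, true) stands for X_i and (i, false) for its complement 1 - X_i. *)
Definition assign (n : nat) := {ffun 'I_n -> bool}.
Definition literal (n : nat) := ('I_n * bool)%type.

Definition lit_val n (L : literal n) (c : assign n) : bool := c L.1 == L.2.

(* B in P-dot(L(C)) : a set of literals not containing both X and its complement *)
Definition consistent n (B : {set literal n}) : bool :=
  [forall i : 'I_n, ~~ (((i, true) \in B) && ((i, false) \in B))].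

Definition conj_val n (B : {set literal n}) (c : assign n) : bool :=
  [forall L in B, lit_val L c].

(* Potential outcomes D(C, Omega): D c w = D_c(w). *)
Definition outcomes (n : nat) (Omega : Type) := assign n -> Omega -> bool.

Definition sufficient_cause n Omega (D : outcomes n Omega) (B : {set literal n}) (w : Omega) : Prop :=
  (exists c, conj_val B c) /\ (forall c, conj_val B c -> D c w).

Definition minimal_sufficient_cause n Omega (D : outcomes n Omega) (B : {set literal n}) (w : Omega) : Prop :=
  sufficient_cause D B w /\
  (forall B' : {set literal n}, B' \proper B -> ~ sufficient_cause D B' w).

Definition singular_for n Omega (D : outcomes n Omega) (B : {set literal n}) (w : Omega) : Prop :=
  minimal_sufficient_cause D B w /\
  (forall B' : {set literal n}, consistent B' -> B' <> B -> ~ minimal_sufficient_cause D B' w).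

Definition singular n Omega (D : outcomes n Omega) (B : {set literal n}) : Prop :=
  exists w : Omega, singular_for D B w.

(* (A, frak B) with p components is a sufficient cause representation for D.
   A_j : Omega -> bool does not depend on the assignment c (unaffected by
   interventions on C). *)
Definition sc_representation n Omega (D : outcomes n Omega) (p : nat)
    (A : 'I_p -> Omega -> bool) (Bs : 'I_p -> {set literal n}) : Prop :=
  (forall j, consistent (Bs j)) /\
  (forall c w, D c w = [exists j, A j w && conj_val (Bs j) c]).

(* Main.v *)
Require Import Defs.
From mathcomp Require Import all_boot.
Set Implicit Arguments. Unset Strict Implicit. Unset Printing Implicit Defensive.

Section Aux.
Variable n : nat.

Definition lits (c : assign n) : {set literal n} := [set (i, c i) | i : 'I_n].

Lemma mem_lits c i v : ((i, v) \in lits c) = (c i == v).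
Proof.
apply/imsetP/eqP => [[j _ [-> ->]] //|<-]; by exists i.
Qed.

Lemma sub_lits (B : {set literal n}) c : (B \subset lits c) = conj_val B c.
Proof.
apply/subsetP/forallP => [H [i v]|H [i v] Hiv].
  apply/implyP => /H; by rewrite mem_lits /lit_val.
by rewrite mem_lits; move: (H (i, v)); rewrite Hiv /lit_val.
Qed.

Lemma conj_lits c' c : conj_val (lits c') c = (c' == c).
Proof.
rewrite -sub_lits; apply/subsetP/eqP => [H|->] //.
apply/ffunP => i; apply/eqP; rewrite eq_sym -mem_lits; apply: H.
by rewrite mem_lits.
Qed.

Lemma lits_consistent c : consistent (lits c).
Proof.
apply/forallP => i; rewrite !mem_lits; by case: (c i).
Qed.

Lemma card_lits c : #|lits c| = n.
Proof.
rewrite card_imset ?card_ord // => i j [] //.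
Qed.

Lemma sat_consistent (B : {set literal n}) c : conj_val B c -> consistent B.
Proof.
move=> /forallP H; apply/forallP => i; apply/negP => /andP [H1 H2].
move: (H (i, true)) (H (i, false)); rewrite H1 H2 /lit_val /=.
by case: (c i).
Qed.

Lemma avoid (S : {set literal n}) k b :
  consistent S -> (k, b) \notin S -> exists c, conj_val S c && (c k != b).
Proof.
move=> /forallP HS Hkb.
exists [ffun j => if j == k then ~~ b else (j, true) \in S].
rewrite ffunE eqxx; apply/andP; split; last by case: b {Hkb}.
apply/forallP => [[j v]]; apply/implyP => Hjv; rewrite /lit_val ffunE /=.
have [Ejk|_] := eqVneq j k.
  rewrite Ejk in Hjv *; case: b v Hkb Hjv => [] [] //= Hkb Hjv; by rewrite Hjv in Hkb.
move: (HS j); case: v Hjv => -> //=; rewrite andbT => /negbTE -> //.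
Qed.

Lemma sat_exists (S : {set literal n}) : consistent S -> exists c, conj_val S c.
Proof.
move=> /forallP HS.
exists [ffun j => (j, true) \in S].
apply/forallP => [[j v]]; apply/implyP => Hjv; rewrite /lit_val ffunE /=.
move: (HS j); case: v Hjv => -> //=; rewrite andbT => /negbTE -> //.
Qed.

End Aux.

Section Main.
Variables (n : nat) (Omega : Type) (D : outcomes n Omega).

Definition suff_b (B : {set literal n}) w :=
  [exists c, conj_val B c] && [forall c, conj_val B c ==> D c w].

Lemma suff_bP B w : reflect (sufficient_cause D B w) (suff_b B w).
Proof.
apply: (iffP andP) => [[/existsP H1 /forallP H2]|[H1 H2]]; split => //.
- by move=> c Hc; move: (H2 c); rewrite Hc.
- by apply/existsP.
- by apply/forallP => c; apply/implyP; apply: H2.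
Qed.

Lemma singular_for_iff (B : {set literal n}) w : consistent B ->
  singular_for D B w <-> (forall c, D c w = conj_val B c).
Proof.
move=> HB; split.
- move=> [[[_ Hs] _] Huniq] c.
  apply/idP/idP; last exact: Hs.
  move=> Dc; apply/negPn/negP => nB.
  have P0 : (lits c \subset lits c) && suff_b (lits c) w.
    rewrite subxx /=; apply/suff_bP; split; first by exists c; rewrite conj_lits.
    by move=> c'; rewrite conj_lits => /eqP <-.
  case: (@arg_minnP _ (lits c) (fun B' => (B' \subset lits c) && suff_b B' w) (fun B' : {set literal n} => #|B'|) P0) => B' /andP [HB'c /suff_bP HB'] Hmin.
  apply: (Huniq B').
  + by case: HB' => [[c0 Hc0] _]; apply: sat_consistent Hc0.
  + by move=> E; subst B'; rewrite -sub_lits HB'c in nB.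
  + split => // B'' Hp /suff_bP Hs''.
    have := Hmin B''; rewrite Hs'' (subset_trans (proper_sub Hp) HB'c) => /(_ isT).
    by rewrite leqNgt proper_card.
- move=> HD.
  have suffB : sufficient_cause D B w.
    split; first exact: sat_exists.
    by move=> c; rewrite HD.
  have key : forall B', sufficient_cause D B' w -> B \subset B'.
    move=> B' [[c0 Hc0] Hs]; apply/subsetP => [[k b]] Hkb.
    apply/negPn/negP => nkb.
    have [c /andP [Hc Hck]] := avoid (sat_consistent Hc0) nkb.
    move: (Hs c Hc); rewrite HD => /forallP /(_ (k, b)); rewrite Hkb /lit_val /=.
    by rewrite (negbTE Hck).
  split.
  + split => // B' Hp Hs.
    by move: Hp; rewrite properE key // andbF.
  + move=> B' _ neq [Hs Hmin]; apply: (Hmin B) => //.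
    by rewrite properEneq key // andbT; apply/eqP => E; apply: neq.
Qed.
End Main.

Section Main2.
Variables (n : nat) (Omega : Type) (D : outcomes n Omega).

Lemma canon_rep :
  sc_representation D (fun (j : 'I_#|{: assign n}|) w => D (enum_val j) w)
    (fun j => lits (enum_val j)).
Proof.
split => [j|c w]; first exact: lits_consistent.
apply/idP/existsP => [Dc|[j /andP [Dj]]].
  by exists (enum_rank c); rewrite enum_rankK conj_lits eqxx andbT.
by rewrite conj_lits => /eqP <-.
Qed.

Lemma rhs_iff (B : {set literal n}) w :
  (forall (p : nat) (A : 'I_p -> Omega -> bool) (Bs : 'I_p -> {set literal n}),
      sc_representation D A Bs ->
      (forall Bstar : {set literal n},
          consistent Bstar -> #|Bstar| = n -> B \subset Bstar ->
          exists i : 'I_p, Bs i \subset Bstar /\ A i w = true) /\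
      (forall i : 'I_p, ~~ (B \subset Bs i) -> A i w = false))
  <-> (forall c, D c w = conj_val B c).
Proof.
split.
- move=> H c; have [H1 H2] := H _ _ _ canon_rep.
  apply/idP/idP => [Dc|Bc].
    rewrite -sub_lits -(enum_rankK c); apply/negPn/negP => nB.
    by have := H2 _ nB; rewrite enum_rankK Dc.
  have HBc : B \subset lits c by rewrite sub_lits.
  have [i [Hi Di]] := H1 (lits c) (lits_consistent c) (card_lits c) HBc.
  by move: Hi Di; rewrite sub_lits conj_lits => /eqP <-.
- move=> HD p A Bs [Hcons Hrep]; split.
  + move=> Bstar Hcs Hcard HBs.
    have [c Hc] := sat_exists Hcs.
    have Esub : Bstar \subset lits c by rewrite sub_lits.
    have E : Bstar = lits c.
      by apply/eqP; rewrite eqEcard Esub Hcard card_lits leqnn.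
    have : D c w by rewrite HD -sub_lits -E.
    rewrite Hrep => /existsP [i /andP [Ai Bi]].
    by exists i; rewrite E sub_lits.
  + move=> i nB; apply/negP => Ai.
    have /subsetPn [[k b] Hkb nkb] := nB.
    have [c /andP [Hc Hck]] := avoid (Hcons i) nkb.
    have : D c w by rewrite Hrep; apply/existsP; exists i; rewrite Ai.
    rewrite HD => /forallP /(_ (k, b)); rewrite Hkb /lit_val /=.
    by rewrite (negbTE Hck).
Qed.
End Main2.

Theorem mainTheorem14 (n : nat) (Omega : Type) (D : outcomes n Omega)
    (B : {set literal n}) (HB : consistent B) :
  singular D B <->
  exists w : Omega,
    forall (p : nat) (A : 'I_p -> Omega -> bool) (Bs : 'I_p -> {set literal n}),
      sc_representation D A Bs ->
      (forall Bstar : {set literal n},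
          consistent Bstar -> #|Bstar| = n -> B \subset Bstar ->
          exists i : 'I_p, Bs i \subset Bstar /\ A i w = true) /\
      (forall i : 'I_p, ~~ (B \subset Bs i) -> A i w = false).
Proof.
split => [[w Hw]|[w Hw]]; exists w.
- by apply/rhs_iff; apply/singular_for_iff.
- by apply/singular_for_iff => //; apply/rhs_iff.
Qed.
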